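(* For every $n\ge1$, the permutation $w=n\,(n-1)\cdots2\,1$ is the unique $w\in S_n$ with $\operatorname{stab}(w)=1$.
   Context: $T(w)$ is the standard skew tableau of shape $(1)\cup\cdots\cup(1)$ ($n$ single cells placed along an anti-diagonal, each strictly northeast of the previous, no shared rows or columns) whose reading word (rows read left to right, from bottom row to top row) is $w$. $\operatorname{stab}(w)=\operatorname{stab}(T(w))$, where for a standard skew tableau $S$ with $m$ cells whose row lengths weakly decrease from top to bottom: $S^{(k)}$ is obtained by attaching $k-1$ shifted copies of $S$ to the right of $S$ (row $i$ of $S^{(k)}$ begins in the same column as row $i$ of $S$ and consists of the entries of row $i$ of $S$, followed by these entries plus $m$, ..., plus $(k-1)m$); $S$ stabilizes at $k$ if every entry in $[(k-1)m+1,km]$ lies in the same row of $\operatorname{Rect}(S^{(k)})$ as in $S^{(k)}$ ($\operatorname{Rect}$ = jeu de taquin rectification); $\operatorname{stab}(S)$ is the least such $k\ge1$. *)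

(* Defs.v *)
From mathcomp Require Import all_boot all_fingroup.
Set Implicit Arguments.
Unset Strict Implicit.
Unset Printing Implicit Defensive.

(* A skew tableau is given by its row offsets [mu] (row i, counted from the
   top starting at 0, begins in column [nth 0 mu i]) and its row contents
   [rows] (row i holds the entries [nth [::] rows i], left to right). *)
Definition skew := (seq nat * seq (seq nat))%type.

Definition cells (S : skew) : seq (nat * nat * nat) :=
  flatten [seq [seq (i, nth 0 S.1 i + j, nth 0 (nth [::] S.2 i) j)
               | j <- iota 0 (size (nth [::] S.2 i))]
          | i <- iota 0 (size S.2)].

Definition ncells (S : skew) : nat := sumn (map size S.2).

Definition lookup (T : seq (nat * nat * nat)) (r c : nat) : option nat :=
  ohead [seq x.2 | x <- T & x.1 == (r, c)].

Definition move (T : seq (nat * nat * nat)) (p q : nat * nat) :=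
  [seq (if x.1 == p then (q, x.2) else x) | x <- T].

(* One forward jeu de taquin slide, the hole being at (r, c).  The hole
   moves at most (#cells) times, so the fuel (#cells).+1 suffices. *)
Fixpoint slide (fuel : nat) (T : seq (nat * nat * nat)) (r c : nat) :=
  match fuel with
  | 0 => T
  | fuel'.+1 =>
    match lookup T r c.+1, lookup T r.+1 c with
    | None, None => T
    | Some _, None => slide fuel' (move T (r, c.+1) (r, c)) r c.+1
    | None, Some _ => slide fuel' (move T (r.+1, c) (r, c)) r.+1 c
    | Some x, Some y =>
        if y < x then slide fuel' (move T (r.+1, c) (r, c)) r.+1 c
        else slide fuel' (move T (r, c.+1) (r, c)) r c.+1
    end
  end.

(* Order in which the cells of the inner shape mu are used as inner corners:
   bottom row first, each row from right to left (each is an inner corner at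
   the time it is used). *)
Definition inner_order (mu : seq nat) : seq (nat * nat) :=
  flatten [seq [seq (r, c) | c <- rev (iota 0 (nth 0 mu r))]
          | r <- rev (iota 0 (size mu))].

Definition Rect (S : skew) : seq (nat * nat * nat) :=
  foldl (fun T rc => slide (size T).+1 T rc.1 rc.2) (cells S) (inner_order S.1).

Definition row_of (T : seq (nat * nat * nat)) (e : nat) : option nat :=
  ohead [seq x.1.1 | x <- T & x.2 == e].

Definition skew_pow (S : skew) (k : nat) : skew :=
  (S.1, [seq flatten [seq [seq x + t * ncells S | x <- row] | t <- iota 0 k]
        | row <- S.2]).

Definition stabilizes (S : skew) (k : nat) : bool :=
  let Sk := skew_pow S k in
  all (fun e => row_of (Rect Sk) e == row_of (cells Sk) e)
      (iota ((k - 1) * ncells S).+1 (ncells S)).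

Definition stab_is (S : skew) (k : nat) : Prop :=
  [/\ 1 <= k, stabilizes S k & forall j, 1 <= j < k -> ~~ stabilizes S j].

(* T(w) for w in S_n (one-line notation w_j = (w (j-1)) + 1).  Row i (from
   the top, 0-based) is the single cell in column n-1-i containing w_{n-i};
   so the reading word (bottom row to top row) is w_1 ... w_n. *)
Definition Tw_seq (n : nat) (v : seq nat) : skew :=
  ([seq n.-1 - i | i <- iota 0 n], [seq [:: nth 0 v (n.-1 - i)] | i <- iota 0 n]).

Definition Tw (n : nat) (w : 'S_n) : skew :=
  Tw_seq n [seq (w i).+1 | i <- enum 'I_n].

(* Main.v *)
Require Import Defs.
From mathcomp Require Import all_boot all_fingroup.
From mathcomp Require Import zify.
Set Implicit Arguments.
Unset Strict Implicit.
Unset Printing Implicit Defensive.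

Definition cfg (n : nat) (v f : nat -> nat) : seq (nat * nat * nat) :=
  [seq (i, f i, v i) | i <- iota 0 n].

Lemma lookup_gen m k (v f : nat -> nat) a b :
  lookup [seq (i, f i, v i) | i <- iota m k] a b =
  if (m <= a < m + k) && (f a == b) then Some (v a) else None.
Proof.
elim: k m => [|k IH] m.
  by rewrite /lookup /= addn0 ltnNge andbN.
rewrite /lookup /= xpair_eqE.
case: (eqVneq m a) => [->|ne] /=.
  rewrite leqnn addnS ltnS leq_addr /=.
  case: (f a == b) => //.
  have := IH a.+1; rewrite /lookup => ->.
  by rewrite ltnn.
have := IH m.+1; rewrite /lookup => ->.
have -> : (m.+1 <= a < m.+1 + k) = (m <= a < m + k.+1).
  apply/andP/andP => -[h1 h2]; split; lia.
by [].
Qed.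

Lemma lookup_cfg n v f a b :
  lookup (cfg n v f) a b = if (a < n) && (f a == b) then Some (v a) else None.
Proof. by rewrite /cfg lookup_gen. Qed.

Lemma move_cfg n v f a b b' :
  move (cfg n v f) (a, b) (a, b') =
  cfg n v (fun i => if (i == a) && (f i == b) then b' else f i).
Proof.
rewrite /move /cfg -map_comp; apply: eq_map => i /=.
rewrite xpair_eqE; case: eqP => [->|] //=; by case: eqP.
Qed.

Lemma cfg_ext n v f g : (forall i, i < n -> f i = g i) -> cfg n v f = cfg n v g.
Proof.
move=> h; rewrite /cfg; apply/eq_in_map => i; rewrite mem_iota /= => hi.
by rewrite h.
Qed.

Lemma slide_left k T r c x :
  lookup T r c.+1 = Some x -> lookup T r.+1 c = None ->
  slide k.+1 T r c = slide k (move T (r, c.+1) (r, c)) r c.+1.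
Proof. by move=> h1 h2; rewrite [LHS]/= h1 h2. Qed.

Lemma slide_up k T r c x y :
  lookup T r c.+1 = Some x -> lookup T r.+1 c = Some y -> y < x ->
  slide k.+1 T r c = slide k (move T (r.+1, c) (r, c)) r.+1 c.
Proof. by move=> h1 h2 h3; rewrite [LHS]/= h1 h2 h3. Qed.

Lemma slide_left2 k T r c x y :
  lookup T r c.+1 = Some x -> lookup T r.+1 c = Some y -> ~~ (y < x) ->
  slide k.+1 T r c = slide k (move T (r, c.+1) (r, c)) r c.+1.
Proof. by move=> h1 h2 h3; rewrite [LHS]/= h1 h2 (negbTE h3). Qed.

Lemma slide_stop k T r c :
  lookup T r c.+1 = None -> lookup T r.+1 c = None -> slide k T r c = T.
Proof. by case: k => [|k] //= -> ->. Qed.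

Definition R3 (x y : nat * nat * nat) := (y.2 == x.2) && (y.1.1 <= x.1.1).
Definition mono (T T' : seq (nat * nat * nat)) := all2 R3 T T'.

Lemma mono_refl T : mono T T.
Proof. by elim: T => //= x T ->; rewrite /R3 eqxx leqnn. Qed.

Lemma mono_trans T1 T2 T3 : mono T1 T2 -> mono T2 T3 -> mono T1 T3.
Proof.
elim: T1 T2 T3 => [|x T1 IH] [|y T2] [|z T3] //=.
move=> /andP[/andP[/eqP e1 l1] h1] /andP[/andP[/eqP e2 l2] h2].
rewrite (IH _ _ h1 h2) andbT /R3 e2 e1 eqxx /=; exact: leq_trans l2 l1.
Qed.

Lemma mono_move T p q : q.1 <= p.1 -> mono T (move T p q).
Proof.
move=> hq; elim: T => //= x T ->; rewrite andbT /R3.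
case: (x.1 =P p) => [e|_] /=; last by rewrite eqxx leqnn.
by rewrite eqxx e.
Qed.

Lemma mono_slide k T r c : mono T (slide k T r c).
Proof.
elim: k T r c => [|k IH] T r c /=; first exact: mono_refl.
case: (lookup T r c.+1) => [x|]; case: (lookup T r.+1 c) => [y|];
  try exact: mono_refl;
  try (case: ifP => _);
  (apply: mono_trans; [apply: mono_move => /= | apply: IH]) => //.
Qed.

Definition stepf (T : seq (nat * nat * nat)) (rc : nat * nat) :=
  slide (size T).+1 T rc.1 rc.2.

Lemma mono_foldl L T : mono T (foldl stepf T L).
Proof.
elim: L T => [|rc L IH] T /=; first exact: mono_refl.
apply: mono_trans (IH _); exact: mono_slide.
Qed.

Lemma row_of_mono T T' e r : mono T T' -> row_of T e = Some r ->
  exists2 r', row_of T' e = Some r' & r' <= r.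
Proof.
elim: T T' => [|x T IH] [|y T'] //=.
move=> /andP[/andP[/eqP e1 l1] h]; rewrite /row_of /= e1.
case: eqP => _ /=; first by move=> [<-]; exists y.1.1.
exact: IH.
Qed.

Lemma row_of_map n (F : nat -> nat * nat * nat) (v : nat -> nat) a :
  (forall i, (F i).2 = v i) ->
  {in iota 0 n &, injective v} -> a < n ->
  row_of [seq F i | i <- iota 0 n] (v a) = Some (F a).1.1.
Proof.
move=> hF inj ha; rewrite /row_of filter_map -map_comp.
have -> : [seq i <- iota 0 n | preim F (fun x => x.2 == v a) i] =
          [seq i <- iota 0 n | pred1 a i].
  apply: eq_in_filter => i hi /=; rewrite hF.
  apply/eqP/eqP => [|->] //; apply: inj => //; by rewrite mem_iota.
by rewrite filter_pred1_uniq ?iota_uniq // mem_iota.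
Qed.

Lemma row_of_cfg n v f g e : row_of (cfg n v f) e = row_of (cfg n v g) e.
Proof. by rewrite /row_of /cfg !filter_map -!map_comp. Qed.

Definition Sg (n : nat) (v : nat -> nat) : skew :=
  ([seq n.-1 - i | i <- iota 0 n], [seq [:: v i] | i <- iota 0 n]).

Definition block (n r : nat) : seq (nat * nat) :=
  [seq (r, c) | c <- rev (iota 0 (n.-1 - r))].

Lemma flatten_single (T U : Type) (F : T -> U) s :
  flatten [seq [:: F i] | i <- s] = [seq F i | i <- s].
Proof. by elim: s => //= x s ->. Qed.

Lemma cells_Sg n v : cells (Sg n v) = cfg n v (fun i => n.-1 - i).
Proof.
rewrite /cells /cfg /= size_map size_iota -[RHS]flatten_single; congr flatten.
apply/eq_in_map => i; rewrite mem_iota /= => hi.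
rewrite (nth_map 0) ?size_iota // nth_iota //= (nth_map 0) ?size_iota //.
by rewrite nth_iota //= addn0.
Qed.

Lemma inner_Sg n v :
  inner_order (Sg n v).1 = flatten [seq block n r | r <- rev (iota 0 n)].
Proof.
rewrite /inner_order /= size_map size_iota; congr flatten.
apply/eq_in_map => r; rewrite mem_rev mem_iota /= => hr.
by rewrite /block (nth_map 0) ?size_iota // nth_iota.
Qed.

Lemma sumn_ones (T : Type) (s : seq T) : sumn [seq 1 | _ <- s] = size s.
Proof. by elim: s => //= x s ->. Qed.

Lemma ncells_Sg n v : ncells (Sg n v) = n.
Proof.
by rewrite /ncells /= -map_comp (eq_map (g := fun _ => 1)) // sumn_ones size_iota.
Qed.

Lemma skew_pow1 S : skew_pow S 1 = S.
Proof.
case: S => mu rows; rewrite /skew_pow /=; congr pair.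
rewrite -[RHS]map_id; apply: eq_map => row /=.
rewrite mul0n cats0 -[RHS]map_id; apply: eq_map => x; exact: addn0.
Qed.

Lemma size_cfg n v f : size (cfg n v f) = n.
Proof. by rewrite size_map size_iota. Qed.

Definition gg (n m i : nat) := if m <= i then 0 else n.-1 - i.
Definition fd (n m d i : nat) := if m < i then 0 else if i == m then d else n.-1 - i.

Lemma fd_m n m d : fd n m d m = d. Proof. by rewrite /fd ltnn eqxx. Qed.
Lemma fd_S n m d : fd n m d m.+1 = 0. Proof. by rewrite /fd ltnSn. Qed.
Lemma gg_m n m : gg n m m = 0. Proof. by rewrite /gg leqnn. Qed.
Lemma gg_S n m : gg n m m.+1 = 0. Proof. by rewrite /gg leqnSn. Qed.
Ltac lk := rewrite lookup_cfg /= ?fd_m ?fd_S ?gg_m ?gg_S; case: ifP => //; lia.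

Lemma step_mid n v m c : m.+1 < n -> 0 < c ->
  stepf (cfg n v (fd n m c.+1)) (m, c) = cfg n v (fd n m c).
Proof.
move=> hm hc; rewrite /stepf size_cfg.
rewrite (@slide_left _ _ _ _ (v m)); [|lk|lk].
rewrite move_cfg (@cfg_ext _ _ _ (fd n m c)); last first.
  move=> i _; rewrite /fd; case: ltnP => // _; case: eqP => //= _.
  by rewrite eqxx.
by rewrite slide_stop //; lk.
Qed.

Lemma prefix n v m k : m.+1 < n ->
  foldl stepf (cfg n v (fd n m k.+1)) [seq (m, c) | c <- rev (iota 1 k)] =
  cfg n v (fd n m 1).
Proof.
move=> hm; elim: k => [|k IH] //.
have -> : iota 1 k.+1 = rcons (iota 1 k) k.+1.
  by rewrite -cats1 -(addn1 k) (iotaD 1 k 1) add1n addn1.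
by rewrite (rev_rcons (iota 1 k) k.+1) /= step_mid.
Qed.

Lemma last_good n v m : m.+1 < n -> ~~ (v m.+1 < v m) ->
  stepf (cfg n v (fd n m 1)) (m, 0) = cfg n v (gg n m).
Proof.
move=> hm hv; rewrite /stepf size_cfg.
rewrite (@slide_left2 _ _ _ _ (v m) (v m.+1)) //; [|lk|lk].
rewrite move_cfg (@cfg_ext _ _ _ (gg n m)); last first.
  move=> i _; rewrite /fd /gg; do ! case: ifP => //; lia.
by rewrite slide_stop //; lk.
Qed.

Lemma last_bad n v m : m.+1 < n -> v m.+1 < v m ->
  stepf (cfg n v (fd n m 1)) (m, 0) =
  slide n (move (cfg n v (fd n m 1)) (m.+1, 0) (m, 0)) m.+1 0.
Proof.
move=> hm hv; rewrite /stepf size_cfg.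
by rewrite (@slide_up _ _ _ _ (v m) (v m.+1)) //; lk.
Qed.

Lemma row_block n v m : m.+1 < n ->
  foldl stepf (cfg n v (gg n m.+1)) (block n m) = stepf (cfg n v (fd n m 1)) (m, 0).
Proof.
move=> hm; rewrite /block.
have -> : n.-1 - m = ((n.-1 - m).-1).+1 by lia.
rewrite [iota 0 _]/= rev_cons map_rcons foldl_rcons; congr stepf.
rewrite -(@prefix n v m ((n.-1 - m).-1) hm); congr foldl; apply: cfg_ext => i hi.
rewrite /gg /fd; do ! case: ifP => //; lia.
Qed.

Lemma good_ind n v k : k <= n ->
  (forall i, n - k <= i -> i.+1 < n -> ~~ (v i.+1 < v i)) ->
  foldl stepf (cfg n v (fun i => n.-1 - i))
    (flatten [seq block n r | r <- rev (iota (n - k) k)]) = cfg n v (gg n (n - k)).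
Proof.
elim: k => [|k IH] hk hv.
  rewrite subn0 /=; apply: cfg_ext => i hi; rewrite /gg; case: ifP => //; lia.
have hm : n - k = (n - k.+1).+1 by lia.
have -> : iota (n - k.+1) k.+1 = (n - k.+1) :: iota (n - k) k by rewrite /= hm.
rewrite rev_cons map_rcons flatten_rcons foldl_cat IH; first last.
- move=> i hi hi'; apply: hv => //; lia.
- lia.
rewrite hm; set m := n - k.+1.
case: (ltnP m.+1 n) => hmn.
  by rewrite row_block // last_good // hv //; lia.
have -> : block n m = [::] by rewrite /block; have -> : n.-1 - m = 0 by lia.
rewrite /=; apply: cfg_ext => i hi; rewrite /gg; do ! case: ifP => //; lia.
Qed.

Lemma Rect_Sg n v : Rect (Sg n v) =
  foldl stepf (cfg n v (fun i => n.-1 - i)) (flatten [seq block n r | r <- rev (iota 0 n)]).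
Proof. by rewrite /Rect cells_Sg inner_Sg. Qed.

Lemma stab_generic n v :
  (forall i, i < n -> 0 < v i <= n) -> {in iota 0 n &, injective v} ->
  stabilizes (Sg n v) 1 <-> (forall i, i.+1 < n -> ~~ (v i.+1 < v i)).
Proof.
move=> hr inj; rewrite /stabilizes skew_pow1 ncells_Sg Rect_Sg cells_Sg.
split; last first.
  move=> hv; have := @good_ind n v n (leqnn n); rewrite subnn => ->; last first.
    by move=> i _; apply: hv.
  apply/allP => e _.
  by rewrite (@row_of_cfg n v (gg n 0) (fun i => n.-1 - i)).
move/allP => H.
suff: forall k, k <= n -> forall i, n - k <= i -> i.+1 < n -> ~~ (v i.+1 < v i).
  by move=> /(_ n (leqnn n)) h i; apply: h; lia.
elim=> [|k IH] hk i hi hin; first lia.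
case: (ltnP (n - k.+1) i) => hi2.
  apply: IH => //; lia.
have ei : i = n - k.+1 by lia.
subst i; apply/negP => hlt.
set m := n - k.+1.
have hm : n - k = m.+1 by rewrite /m; lia.
have em : iota 0 n = iota 0 m ++ m :: iota (n - k) k.
  have -> : iota 0 n = iota 0 (m + k.+1) by congr iota; rewrite /m; lia.
  by rewrite iotaD add0n /= hm.
move: (H (v m.+1)).
rewrite em rev_cat rev_cons map_cat map_rcons flatten_cat flatten_rcons !foldl_cat.
rewrite good_ind; first last.
- move=> j hj hj'; apply: IH => //; lia.
- lia.
rewrite hm row_block // last_bad //.
have mem1 : v m.+1 \in iota ((1 - 1) * n).+1 n.
  by rewrite mem_iota subnn mul0n /m; have := hr _ hin; lia.
move=> /(_ mem1) /eqP.
have -> : row_of (cfg n v [eta subn n.-1]) (v m.+1) = Some m.+1.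
  by rewrite /cfg (@row_of_map n (fun i => (i, n.-1 - i, v i)) v m.+1).
set T1 := move _ _ _.
have hT1 : row_of T1 (v m.+1) = Some m.
  rewrite /T1 /move /cfg -map_comp.
  rewrite (@row_of_map n _ v m.+1) //=; first by rewrite fd_S eqxx.
  by move=> j /=; case: ifP.
have mo : mono T1 (foldl stepf (slide n T1 m.+1 0)
            (flatten [seq block n r | r <- rev (iota 0 m)])).
  exact: mono_trans (mono_slide _ _ _ _) (mono_foldl _ _).
have [r' -> hr'] := row_of_mono mo hT1.
by move=> [er]; rewrite er ltnn in hr'.
Qed.

Lemma stab_is1 S : stab_is S 1 <-> stabilizes S 1.
Proof.
split; first by case.
move=> h; split => // j /andP[h1 h2]; exfalso; lia.
Qed.

Lemma chain N (v : nat -> nat) : (forall i, i.+1 < N -> v i < v i.+1) ->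
  forall k i, i + k < N -> v i + k <= v (i + k).
Proof.
move=> h; elim=> [|k IH] i hik; first by rewrite !addn0.
have h3 : v i + k <= v (i + k) by apply: IH; lia.
have h2 : v (i + k) < v (i + k).+1 by apply: h; lia.
rewrite !addnS; lia.
Qed.

Unset Implicit Arguments.

Theorem mainTheorem18 (n : nat) (hn : 1 <= n) (w : 'S_n) :
  stab_is (Tw w) 1 <-> (forall i : 'I_n, w i = rev_ord i).
Proof.
case: n hn w => [//|n'] _ w.
set v := fun i => nth 0 [seq (w j).+1 | j <- enum 'I_n'.+1] (n'.+1.-1 - i).
have eT : Tw w = Sg n'.+1 v by [].
have hv : forall i, i < n'.+1 -> v i = (w (inord (n' - i))).+1.
  move=> i hi; rewrite /v /= (nth_map ord0) ?size_enum_ord; last lia.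
  congr (w _).+1; apply: val_inj; rewrite /= nth_enum_ord ?inordK //; lia.
have hr : forall i, i < n'.+1 -> 0 < v i <= n'.+1.
  by move=> i hi; rewrite hv // ltn0Sn /= ltn_ord.
have inj : {in iota 0 n'.+1 &, injective v}.
  move=> i j; rewrite !mem_iota /= => hi hj; rewrite !hv // => /succn_inj/val_inj e; have := @perm_inj _ w _ _ e.
  move=> /(congr1 val); rewrite /= !inordK; lia.
rewrite stab_is1 eT stab_generic //; split.
  move=> H.
  have hs : forall i, i.+1 < n'.+1 -> v i < v i.+1.
    move=> i hi; have := H i hi; rewrite -leqNgt leq_eqVlt => /orP[/eqP e|//].
    have := inj _ _ _ _ e; rewrite !mem_iota; lia.
  move=> j; apply: val_inj => /=.
  have hj := ltn_ord j.
  have [i ei] : exists i, i = n' - j by eexists.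
  have hvi : v i = (w j).+1.
    rewrite hv ?ei; last lia.
    congr (w _).+1; apply: val_inj; rewrite /= inordK; lia.
  have c1 : v 0 + i <= v i.
    have := @chain _ _ hs i 0; rewrite add0n; apply; lia.
  have c2 : v i + (n' - i) <= v n'.
    have := @chain _ _ hs (n' - i) i.
    have -> : i + (n' - i) = n' by lia.
    apply; lia.
  have := hr 0 (ltn0Sn _); have := hr n' (ltnSn _).
  rewrite hvi in c1 c2; lia.
move=> H i hi.
rewrite !hv; [|lia|lia].
rewrite !H /= !inordK; lia.
Qed.
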